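(* A shift space $X$ is dendric if and only if, for every $n\in\mathbb{N}$, the graph $G^L_n(X)$ is acyclic for the labeling and connected; equivalently, if and only if, for every $n\in\mathbb{N}$, the graph $G^R_n(X)$ is acyclic for the labeling and connected.
   Context: $X\subseteq\mathcal{A}^{\mathbb{Z}}$ is a shift space over a finite alphabet $\mathcal{A}$ with language $\mathcal{L}(X)$, $\mathcal{L}_n(X)$ its words of length $n$. For $v\in\mathcal{L}(X)$, $E^L_X(v)=\{a:av\in\mathcal{L}(X)\}$, $E^R_X(v)=\{b:vb\in\mathcal{L}(X)\}$, and $\mathcal{E}_X(v)$ is the bipartite graph whose vertices are the disjoint union of $\{a^L:a\in E^L_X(v)\}$ and $\{b^R:b\in E^R_X(v)\}$, with an edge $\{a^L,b^R\}$ whenever $avb\in\mathcal{L}(X)$. $X$ is dendric if $\mathcal{E}_X(v)$ is a tree for every $v\in\mathcal{L}(X)$. $G^L_n(X)$ (resp. $G^R_n(X)$) is the multigraph with labeled edges on vertex set $\mathcal{A}$ having, for each $v\in\mathcal{L}_n(X)$ and each pair of distinct $a,b\in E^L_X(v)$ (resp. $E^R_X(v)$), an edge labeled $v$ between $a$ and $b$. Acyclic for the labeling: every simple cycle uses only edges with a single label. *)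

(* Defs.v *)
From Stdlib Require Import Relations.
From mathcomp Require Import all_boot all_order all_algebra.
Set Implicit Arguments. Unset Strict Implicit. Unset Printing Implicit Defensive.
Import GRing.Theory Num.Theory.

Section Shifts.
Variable A : finType.

Definition point := int -> A.

Definition shift (x : point) : point := fun i => x (i + 1)%R.

Definition occurs (w : seq A) (x : point) (i : int) : Prop :=
  [seq x (i + k%:Z)%R | k <- iota 0 (size w)] = w.

(* X is closed in the product topology (A discrete): if every central
   window [-N, N] of x agrees with some point of X, then x is in X *)
Definition closed_shift (X : point -> Prop) : Prop :=
  forall x : point,
    (forall N : nat, exists y, X y /\
        forall i : int, (`|i| <= N)%N -> y i = x i) -> X x.

Definition shift_invariant (X : point -> Prop) : Prop :=
  forall x : point, X x <-> X (shift x).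

Definition shift_space (X : point -> Prop) : Prop :=
  closed_shift X /\ shift_invariant X.

Definition lang (X : point -> Prop) (w : seq A) : Prop :=
  exists x, X x /\ exists i, occurs w x i.

Definition EL (X : point -> Prop) (v : seq A) (a : A) : Prop := lang X (a :: v).
Definition ER (X : point -> Prop) (v : seq A) (b : A) : Prop := lang X (rcons v b).

(* ---------- extension graph E_X(v) on vertex type A + A
   (inl a = a^L, inr b = b^R) ---------- *)
Definition ext_vertex (X : point -> Prop) (v : seq A) (u : A + A) : Prop :=
  match u with inl a => EL X v a | inr b => ER X v b end.

Definition ext_adj (X : point -> Prop) (v : seq A) (u w : A + A) : Prop :=
  match u, w with
  | inl a, inr b => lang X (a :: rcons v b)
  | inr b, inl a => lang X (a :: rcons v b)
  | _, _ => False
  end.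

Definition is_tree (T : Type) (V : T -> Prop) (adj : T -> T -> Prop) : Prop :=
  (forall u w, V u -> V w -> clos_refl_trans T adj u w) /\
  (forall (k : nat) (c : 'I_k -> T), (3 <= k)%N -> injective c ->
     ~ (forall i : 'I_k, adj (c i) (c (ordS i)))).

Definition dendric (X : point -> Prop) : Prop :=
  forall v, lang X v -> is_tree (ext_vertex X v) (ext_adj X v).

(* ---------- labeled multigraphs on vertex set A, labels in seq A ----------
   E l a b : there is an edge labeled l between a and b (at most one per
   label and unordered pair). *)
Definition GL (X : point -> Prop) (n : nat) (l : seq A) (a b : A) : Prop :=
  size l = n /\ lang X l /\ a <> b /\ EL X l a /\ EL X l b.

Definition GR (X : point -> Prop) (n : nat) (l : seq A) (a b : A) : Prop :=
  size l = n /\ lang X l /\ a <> b /\ ER X l a /\ ER X l b.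

Definition label_acyclic (E : seq A -> A -> A -> Prop) : Prop :=
  forall (k : nat) (xs : 'I_k -> A) (ls : 'I_k -> seq A),
    (2 <= k)%N -> injective xs ->
    (forall i, E (ls i) (xs i) (xs (ordS i))) ->
    (forall i j, i <> j ->
       ~ (ls i = ls j /\
          ((xs i = xs j /\ xs (ordS i) = xs (ordS j)) \/
           (xs i = xs (ordS j) /\ xs (ordS i) = xs j)))) ->
    forall i j, ls i = ls j.

Definition mg_connected (E : seq A -> A -> A -> Prop) : Prop :=
  forall a b : A, clos_refl_trans A (fun x y => exists l, E l x y) a b.

End Shifts.

(* Main.v *)
Require Import Defs.
From mathcomp Require Import all_boot all_order all_algebra.
From mathcomp Require Import boolp.
From Stdlib Require Import Relations.
From mathcomp Require Import zify.

Set Implicit Arguments. Unset Strict Implicit. Unset Printing Implicit Defensive.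

Lemma crt_mono (T : Type) (R S : T -> T -> Prop) a b :
  (forall x y, R x y -> S x y) -> clos_refl_trans T R a b -> clos_refl_trans T S a b.
Proof.
move=> H; elim => [x y /H|x|x y z _ IH1 _ IH2]; [exact: rt_step|exact: rt_refl|].
exact: rt_trans IH1 IH2.
Qed.

Lemma crt_sym (T : Type) (R : T -> T -> Prop) a b :
  (forall x y, R x y -> R y x) -> clos_refl_trans T R a b -> clos_refl_trans T R b a.
Proof.
move=> H; elim => [x y /H|x|x y z _ IH1 _ IH2]; [exact: rt_step|exact: rt_refl|].
exact: rt_trans IH2 IH1.
Qed.

Lemma crt_ind (T : Type) (R : T -> T -> Prop) (P : T -> Prop) a b :
  P a -> (forall x y, P x -> R x y -> P y) -> clos_refl_trans T R a b -> P b.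
Proof.
move=> Pa H /clos_rt_rt1n_iff Hc.
have: forall x, P x -> clos_refl_trans_n1 T R x b -> P b.
  move=> x Px; elim => // y z Ryz _ IH; exact: H IH Ryz.
by apply; [exact Pa| apply/clos_rt_rtn1_iff/clos_rt_rt1n_iff].
Qed.

Lemma crt_nil (T : Type) (R : T -> T -> Prop) a b :
  (forall x y, ~ R x y) -> clos_refl_trans T R a b -> a = b.
Proof.
move=> H Hc; apply: (crt_ind (P := fun x => a = x)) Hc => // x y _ /H [].
Qed.

Lemma modS_small k i : i < k -> i.+1 %% k = if i.+1 == k then 0 else i.+1.
Proof.
move=> ik; case: eqP => [->|ne]; first by rewrite modnn.
rewrite modn_small //; lia.
Qed.

Section Gen.
Variable T : eqType.

Lemma crt_path (R : T -> T -> Prop) a b : clos_refl_trans T R a b ->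
  exists p, path (fun x y => `[< R x y >]) a p /\ last a p = b.
Proof.
move=> H; apply clos_rt_rt1n in H; elim: H => [x|x y z Rxy _ [p [Hp Hl]]]; first by exists [::].
exists (y :: p); split => //=; rewrite Hp andbT; exact/asboolP.
Qed.

Lemma crt_spath R a b : clos_refl_trans T R a b ->
  exists p, [/\ uniq (a :: p), path (fun x y => `[< R x y >]) a p & last a p = b].
Proof.
move/crt_path => [p [Hp <-]].
case: (shortenP Hp) => p' Hp' Hu _. by exists p'.
Qed.

Lemma path_nth (R : T -> T -> Prop) x p i : path (fun x y => `[< R x y >]) x p ->
  i < size p -> R (nth x (x :: p) i) (nth x p i).
Proof. by move=> /(pathP x) H /H /asboolP. Qed.

Definition rm (adj : T -> T -> Prop) x y u w :=
  adj u w /\ ~ (u = x /\ w = y) /\ ~ (u = y /\ w = x).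
Definition cycfree (adj : T -> T -> Prop) := forall (k : nat) (c : 'I_k -> T),
  (3 <= k)%N -> injective c -> ~ (forall i : 'I_k, adj (c i) (c (ordS i))).
Definition bridge (adj : T -> T -> Prop) :=
  forall x y, adj x y -> ~ clos_refl_trans T (rm adj x y) x y.

Lemma nth_inj (s : seq T) x0 : uniq s ->
  injective (fun i : 'I_(size s) => nth x0 s i).
Proof.
move=> Hu i j /eqP; rewrite nth_uniq // => /eqP H; exact: val_inj.
Qed.

Lemma cycfree_bridge adj : (forall x y, adj x y -> adj y x) ->
  (forall x, ~ adj x x) -> cycfree adj -> bridge adj.
Proof.
move=> sym irr Hc x y Axy /crt_spath [p [Hu Hp Hl]].
case: p Hu Hp Hl => [|z p] Hu Hp Hl; first by move: Axy; rewrite -Hl /=; apply: irr.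
case: p Hu Hp Hl => [|z' p] Hu Hp Hl.
  move: Hp => /= /andP [/asboolP [_ [H _]] _]; apply: H; split => //.
apply: (Hc (size [:: x, z, z' & p]) (fun i => nth x [:: x, z, z' & p] i)) => //.
  exact: nth_inj.
move=> i; rewrite /= modS_small ?ltn_ord //.
case: eqP => [Hi|Hi].
  have -> : nth x [:: x, z, z' & p] i = y.
    have -> : (i : nat) = (size [:: x, z, z' & p]).-1 by rewrite /=; lia.
    by rewrite nth_last.
  exact: sym.
have Hi' : i < size [:: z, z' & p] by have := ltn_ord i; rewrite /= in Hi *; lia.
have := path_nth Hp Hi'; rewrite /rm /= => -[]; done.
Qed.

Lemma bridge_cycfree adj : (forall x y, adj x y -> adj y x) -> bridge adj -> cycfree adj.
Proof.
move=> sym Hb k c k3 ci Hcyc.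
have k0 : 0 < k by lia.
pose C (i : nat) := c (Ordinal (ltn_pmod i k0)).
have HC : forall i, adj (C i) (C i.+1).
  move=> i; have := Hcyc (Ordinal (ltn_pmod i k0)); rewrite /C.
  congr adj; congr c; apply: val_inj => /=; by rewrite -addn1 modnDml addn1.
have CI : forall i j, C i = C j -> i %% k = j %% k.
  by move=> i j /ci /(congr1 val).
have Hm : forall m, 1 <= m <= k -> clos_refl_trans T (rm adj (C 1) (C 0)) (C 1) (C m).
  elim => [|m IH] // /andP [m1 mk].
  case: (posnP m) => [m0|mpos]; first by rewrite m0; apply: rt_refl.
  apply: rt_trans (IH _) _; first by apply/andP; lia.
  apply: rt_step; split; first exact: HC.
  split => -[H1 H2].
    have := CI _ _ H1; rewrite !modn_small; try lia.
    move=> mE; have := CI _ _ H2; rewrite mE !modn_small; lia.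
  have := CI _ _ H1; rewrite !modn_small; lia.
have := Hm k; rewrite leqnn andbT => /(_ (ltnW (ltnW k3))).
have -> : C k = C 0 by congr c; apply: val_inj; rewrite /= modnn mod0n.
apply: Hb; exact: sym.
Qed.

End Gen.

Lemma last_before (b : pred nat) j : b 0 ->
  exists p, [/\ p <= j, b p & forall i, p < i <= j -> ~~ b i].
Proof.
move=> b0; elim: j => [|j [p [pj bp H]]].
  by exists 0; split => // i /andP [h1 h2]; exfalso; lia.
case: (boolP (b j.+1)) => h.
  by exists j.+1; split => // i /andP [h1 h2]; exfalso; lia.
exists p; split => //; first lia.
move=> i /andP [h1 h2]; case: (eqVneq i j.+1) => [->//|ne].
apply: H; apply/andP; split => //; lia.
Qed.

Lemma first_after (b : pred nat) m j : b (j + m) ->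
  exists q, [/\ j <= q <= j + m, b q & forall i, j <= i < q -> ~~ b i].
Proof.
elim: m j => [|m IH] j.
  by rewrite addn0 => h; exists j; split => //; [lia| move=> i /andP[h1 h2]; exfalso; lia].
move=> h; case: (boolP (b j)) => hj.
  by exists j; split => //; [lia| move=> i /andP[h1 h2]; exfalso; lia].
have := IH j.+1; rewrite addSnnS => /(_ h) [q [/andP [q1 q2] bq H]].
exists q; split => //; first (apply/andP; lia).
move=> i /andP [h1 h2]; case: (eqVneq i j) => [->//|ne].
apply: H; apply/andP; split => //; lia.
Qed.

Lemma no2cyc k (i j : 'I_k) : 3 <= k -> val i = j.+1 %% k -> val j = i.+1 %% k -> False.
Proof.
move=> k3; rewrite !modS_small ?ltn_ord //; case: i j => [i ilt] [j jlt] /=.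
by do 2 case: eqP => ?; lia.
Qed.

Section Lab.
Variable A : finType.
Definition LA (E : seq A -> A -> A -> Prop) := forall l a b, E l a b ->
  ~ clos_refl_trans A (fun x y => exists m, m <> l /\ E m x y) a b.

Lemma path_labels (Q : seq A -> A -> A -> Prop) d e x p :
  path (fun u w => `[< exists m, Q m u w >]) x p ->
  exists t, size t = size p /\ forall i, i < size p ->
     Q (nth d t i) (nth e (x::p) i) (nth e p i).
Proof.
elim: p x => [|y p IH] x /=; first by exists [::].
case/andP => /asboolP [m Hm] /IH [t [st Ht]].
exists (m :: t); split; first by rewrite /= st.
by case => [|i] //= Hi; apply: Ht.
Qed.

Lemma LA_of_la E : (forall l a b, E l a b -> E l b a) -> (forall l a b, E l a b -> a <> b) ->
  label_acyclic E -> LA E.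
Proof.
move=> sym irr Hla l a b Eab /crt_spath [p [Hu Hp Hl]].
have [t [st Ht]] := path_labels (Q := fun m u w => m <> l /\ E m u w) l a Hp.
case: p Hu Hp Hl st Ht => [|z p] Hu Hp Hl st Ht; first by move: Hl => /= Hl; apply: (irr _ _ _ Eab).
set s := a :: z :: p.
have k2 : 2 <= size s by [].
have inj := nth_inj (x0 := a) Hu.
have t0 : nth l t 0 <> l by have := Ht 0 isT => -[].
have edges : forall i : 'I_(size s), E (nth l (rcons t l) i) (nth a s i) (nth a s (ordS i)).
  move=> i; rewrite /= modS_small ?ltn_ord //; case: eqP => Hi.
    have -> : nth a s i = b.
      have -> : (i : nat) = (size s).-1 by rewrite /=; lia.
      by rewrite nth_last.
    rewrite nth_rcons st.
    have -> : ((i : nat) < size (z :: p)) = false by rewrite /=; lia.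
    have -> : ((i : nat) == size (z :: p)) = true by apply/eqP; rewrite /=; lia.
    exact: sym.
  have Hi' : (i : nat) < size (z :: p) by have := ltn_ord i; rewrite /= in Hi *; lia.
  rewrite nth_rcons st Hi'; exact: (Ht _ Hi').2.
have := Hla (size s) (fun i => nth a s i) (fun i => nth l (rcons t l) i) k2 inj edges.
have sl : (size (z :: p)) < size s by [].
move=> H; apply: (t0).
have := H _ (Ordinal (isT : 0 < size s)) (Ordinal sl) => /=.
rewrite !nth_rcons st ltnn eqxx /=; apply.
move=> i j ij [eqls [[H1 _]|[H1 H2]]]; first by apply ij; apply: inj.
have e1 := congr1 val (inj i (ordS j) H1); have e2 := congr1 val (inj (ordS i) j H2).
case: (posnP (size p)) => [/size0nil p0|ppos].
  subst p; clear H1 H2; move: eqls e1 e2 ij; rewrite !nth_rcons st /=.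
  case: i => [[|[|i]] ?] //=; case: j => [[|[|j]] ?] //=.
  by move=> /esym.
have k3 : 3 <= (size p).+2 by lia.
exact (no2cyc k3 e1 (esym e2)).
Qed.

Lemma la_of_LA E : (forall l x y z w, E l x y -> E l z w -> y <> z -> E l y z) ->
  LA E -> label_acyclic E.
Proof.
move=> cliq HLA k xs ls k2 inj edges _.
have k0 : 0 < k by lia.
suff H : forall j, ls j = ls (Ordinal k0) by move=> i j; rewrite !H.
move=> j; case: (boolP (ls j == ls (Ordinal k0))) => [/eqP//|/eqP ne]; exfalso.
set l := ls (Ordinal k0) in ne.
pose idx i := Ordinal (ltn_pmod i k0).
pose X i := xs (idx i). pose F i := ls (idx i).
have HE : forall i, E (F i) (X i) (X i.+1).
  move=> i; have := edges (idx i); rewrite /X /F.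
  congr E; congr xs; apply: val_inj => /=; by rewrite -addn1 modnDml addn1.
have XI : forall i i', X i = X i' -> i %% k = i' %% k.
  by move=> i i' /inj /(congr1 val).
have F0 : F 0 = l by rewrite /F /l; congr ls; apply: val_inj; rewrite /= mod0n.
have Fk : F k = l by rewrite /F /l; congr ls; apply: val_inj; rewrite /= modnn.
have Fj : F j = ls j by rewrite /F; congr ls; apply: val_inj; rewrite /= modn_small.
have [p [pj bp Hp]] := @last_before (fun i => F i == l) j (introT eqP F0).
have jk : (j : nat) < k by [].
have bk : (fun i => F i == l) (j + (k - j)) by rewrite /= subnKC ?Fk ?(ltnW jk).
have [q [/andP [q1 q2] bq Hq]] := @first_after (fun i => F i == l) (k - j) j bk.
move/eqP: bp => bp; move/eqP: bq => bq.
have pj' : p < j by case: (eqVneq p j) => [e|]; [by move: bp; rewrite e Fj|lia].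
have qj' : j < q by case: (eqVneq q j) => [e|]; [by move: bq; rewrite e Fj|lia].
have Fne : forall i, p < i < q -> F i <> l.
  move=> i /andP [h1 h2]; case: (leqP i j) => h.
    by apply/eqP; apply: Hp; apply/andP.
  by apply/eqP; apply: Hq; apply/andP; split => //; lia.
have conn : forall d, p.+1 + d <= q -> clos_refl_trans A
     (fun x y => exists m, m <> l /\ E m x y) (X p.+1) (X (p.+1 + d)).
  elim => [|d IH] h; first by rewrite addn0; apply: rt_refl.
  apply: rt_trans (IH _) _; first lia.
  apply: rt_step; exists (F (p.+1 + d)); split; last by rewrite addnS; apply: HE.
  by apply: Fne; apply/andP; split; lia.
have := conn (q - p.+1); rewrite subnKC; last lia.
move=> /(_ (leqnn q)); apply: HLA.
apply: (cliq _ (X p) _ _ (X q.+1)); first by rewrite -bp; apply: HE.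
  by rewrite -bq; apply: HE.
move=> /XI; rewrite (modn_small (m := p.+1)); last lia.
case: (ltngtP q k) => h; [rewrite modn_small //; lia | lia | rewrite h modnn; lia].
Qed.
End Lab.

Section Lang.
Variable A : finType.
Variable L : seq A -> Prop.
Hypothesis Lfl : forall a w, L (a :: w) -> L w.
Hypothesis Lfr : forall w b, L (rcons w b) -> L w.
Hypothesis Lel : forall w, L w -> exists a, L (a :: w).
Hypothesis Ler : forall w, L w -> exists b, L (rcons w b).
Hypothesis Lletter : forall a, L [:: a].

Definition vtx (v : seq A) (u : A + A) : Prop :=
  match u with inl a => L (a :: v) | inr b => L (rcons v b) end.
Definition adjL (v : seq A) (u w : A + A) : Prop :=
  match u, w with
  | inl a, inr b => L (a :: rcons v b)
  | inr b, inl a => L (a :: rcons v b)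
  | _, _ => False
  end.
Definition dendL := forall v, L v -> is_tree (vtx v) (adjL v).
Definition GLL (n : nat) (l : seq A) (a b : A) : Prop :=
  size l = n /\ L l /\ a <> b /\ L (a :: l) /\ L (b :: l).
Definition Ru n u x y := exists m, m <> u /\ GLL n m x y.

Lemma adj_sym v x y : adjL v x y -> adjL v y x.
Proof. by case: x; case: y. Qed.
Lemma adj_irr v x : ~ adjL v x x.
Proof. by case: x => ? [] //. Qed.
Lemma GLL_sym n l a b : GLL n l a b -> GLL n l b a.
Proof. by move=> [h1 [h2 [h3 [h4 h5]]]]; split; [|split; [|split; [move=> e; apply: h3|]]]. Qed.
Lemma GLL_irr n l a b : GLL n l a b -> a <> b.
Proof. by move=> [? [? [? [? ?]]]]. Qed.
Lemma GLL_cliq n l x y z w : GLL n l x y -> GLL n l z w -> y <> z -> GLL n l y z.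
Proof. by move=> [? [? [? [? ?]]]] [? [? [? [? ?]]]]; do !split. Qed.

Lemma Lrc a u b : L (a :: rcons u b) -> L (a :: u).
Proof. exact (@Lfr (a :: u) b). Qed.

Lemma GLL_S n u b x y : GLL n.+1 (rcons u b) x y ->
  [/\ size u = n, L (rcons u b), x <> y, L (x :: rcons u b) & L (y :: rcons u b)].
Proof. by rewrite /GLL size_rcons => -[[?] [? [? [? ?]]]]. Qed.

Lemma GLL_Sproj n u b x y : GLL n.+1 (rcons u b) x y -> GLL n u x y.
Proof.
case/GLL_S => su Lub xy Lx Ly; do !split => //; [exact: Lfr Lub|exact: Lrc Lx|exact: Lrc Ly].
Qed.

Lemma GLL_Sdec n w x y : GLL n.+1 w x y -> exists u b, w = rcons u b.
Proof. by case/lastP: w => [[]|u b] //; exists u, b. Qed.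

Lemma key n u c x : LA (GLL n) -> L u -> size u = n -> L (c :: u) -> L (x :: u) ->
  clos_refl_trans A (Ru n u) c x -> c = x.
Proof.
move=> HLA Lu su Lc Lx H; case: (eqVneq c x) => // ne; exfalso.
by apply: (HLA u c x _ H); do !split => //; apply/eqP.
Qed.

Lemma conn_step n : (forall u, L u -> size u = n -> forall a a', L (a :: u) -> L (a' :: u) ->
     clos_refl_trans _ (adjL u) (inl a) (inl a')) ->
  mg_connected (GLL n) -> mg_connected (GLL n.+1).
Proof.
move=> HE Hc a b.
apply: (crt_ind (P := fun x => clos_refl_trans A (fun x y => exists l, GLL n.+1 l x y) a x))
  (Hc a b); first exact: rt_refl.
move=> x y Hax [u [su [Lu [xy [Lx Ly]]]]]; apply: rt_trans Hax _.
have := HE u Lu su x y Lx Ly.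
apply: (crt_ind (P := fun w => match w with
   | inl z => clos_refl_trans A (fun x y => exists l, GLL n.+1 l x y) x z
   | inr b => exists z, L (z :: rcons u b) /\
        clos_refl_trans A (fun x y => exists l, GLL n.+1 l x y) x z end)).
  exact: rt_refl.
case=> [z|b'] [z'|b''] //=.
  by move=> H Lz; exists z.
move=> [z [Lz Hz]] Lz'; case: (eqVneq z z') => [<-//|ne].
eapply rt_trans; [exact Hz|]; apply: rt_step; exists (rcons u b'); do !split => //.
- by rewrite size_rcons su.
- exact: Lfl Lz.
- exact/eqP.
Qed.

Lemma LA_step n : LA (GLL n) -> (forall u, L u -> size u = n -> bridge (adjL u)) ->
  LA (GLL n.+1).
Proof.
move=> HLA Hb w a a' Gw Hc.
have [u [b Ew]] := GLL_Sdec Gw; subst w.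
have [su Lub aa' La La'] := GLL_S Gw.
have Lu := Lfr Lub.
pose P x := exists c, [/\ L (c :: u),
  clos_refl_trans _ (rm (adjL u) (inl a) (inr b)) (inl a) (inl c) &
  clos_refl_trans A (Ru n u) c x].
have : P a'.
  apply: (crt_ind (P := P)) Hc; first by exists a; split; [exact: Lrc La|exact: rt_refl|exact: rt_refl].
  move=> x y [c [Lc Hac Hcx]] [m [mne Gm]].
  have [u' [b'' Em]] := GLL_Sdec Gm; subst m.
  have [su' Lub' xy Lx Ly] := GLL_S Gm.
  case: (eqVneq u' u) => [Eu|ne].
    subst u'.
    have bb : b'' <> b by move=> e; apply: mne; rewrite e.
    have cx := key HLA Lu su Lc (Lrc Lx) Hcx; subst x.
    exists y; split; [exact: Lrc Ly| |exact: rt_refl].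
    eapply rt_trans; [exact Hac|]; eapply rt_trans; [apply: (rt_step _ _ (inl c) (inr b''))|apply: rt_step].
      by split => //; split; [case=> _ [e]; exact: bb|by case].
    by split => //; split; [by case|case=> -[e] _; exact: bb].
  exists c; split => //; apply: rt_trans Hcx (rt_step _ _ _ _ _).
  by exists u'; split; [exact/eqP|exact: GLL_Sproj Gm].
move=> [c [Lc Hac Hca']].
have := key HLA Lu su Lc (Lrc La') Hca' => E; subst c.
apply: (Hb u Lu su (inl a) (inr b) La).
apply: rt_trans Hac (rt_step _ _ _ _ _).
by split => //; split; [case=> -[e] _; exact: aa'|by case].
Qed.

Lemma Econn_left n u : LA (GLL n) -> mg_connected (GLL n.+1) -> L u -> size u = n ->
  forall a a', L (a :: u) -> L (a' :: u) -> clos_refl_trans _ (adjL u) (inl a) (inl a').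
Proof.
move=> HLA Hc Lu su a a' La La'.
pose P x := exists c, [/\ L (c :: u),
  clos_refl_trans _ (adjL u) (inl a) (inl c) & clos_refl_trans A (Ru n u) c x].
have : P a'.
  apply: (crt_ind (P := P)) (Hc a a'); first by exists a; split; [ |exact: rt_refl|exact: rt_refl].
  move=> x y [c [Lc Hac Hcx]] [m Gm].
  have [u' [b'' Em]] := GLL_Sdec Gm; subst m.
  have [su' Lub' xy Lx Ly] := GLL_S Gm.
  case: (eqVneq u' u) => [Eu|ne].
    subst u'.
    have cx := key HLA Lu su Lc (Lrc Lx) Hcx; subst x.
    exists y; split; [exact: Lrc Ly| |exact: rt_refl].
    eapply rt_trans; [exact Hac|]; eapply rt_trans; [apply: (rt_step _ _ (inl c) (inr b''))|apply: rt_step] => //.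
  exists c; split => //; apply: rt_trans Hcx (rt_step _ _ _ _ _).
  by exists u'; split; [exact/eqP|exact: GLL_Sproj Gm].
move=> [c [Lc Hac Hca']].
by have := key HLA Lu su Lc La' Hca' => E; subst c.
Qed.

Lemma Econn n u : LA (GLL n) -> mg_connected (GLL n.+1) -> L u -> size u = n ->
  forall p q, vtx u p -> vtx u q -> clos_refl_trans _ (adjL u) p q.
Proof.
move=> HLA Hc Lu su.
have toleft : forall p, vtx u p -> exists a, L (a :: u) /\ clos_refl_trans _ (adjL u) p (inl a).
  case=> [a|b] /= H; first by exists a; split => //; exact: rt_refl.
  have [a La] := Lel H; exists a; split; [exact: Lrc La|exact: rt_step].
move=> p q /toleft [a [La Hpa]] /toleft [a' [La' Hqa']].
eapply rt_trans; [exact Hpa|]; eapply rt_trans; [exact (Econn_left HLA Hc Lu su La La')|].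
apply: crt_sym Hqa'; exact: adj_sym.
Qed.

Lemma bridge_case1 n u a b : LA (GLL n.+1) -> size u = n -> L (a :: rcons u b) ->
  ~ clos_refl_trans _ (rm (adjL u) (inl a) (inr b)) (inl a) (inr b).
Proof.
move=> HLA su Lab Hc.
pose G' x y := exists m, m <> rcons u b /\ GLL n.+1 m x y.
pose Done := exists a', [/\ a' <> a, L (a' :: rcons u b) & clos_refl_trans A G' a a'].
have : match inr b with
   | inl x => clos_refl_trans A G' a x \/ Done
   | inr b'' => Done \/ (b'' <> b /\ exists x, L (x :: rcons u b'') /\ clos_refl_trans A G' a x) end.
  apply: (crt_ind (P := fun w => match w with
   | inl x => clos_refl_trans A G' a x \/ Done
   | inr b'' => Done \/ (b'' <> b /\ exists x, L (x :: rcons u b'') /\ clos_refl_trans A G' a x) end)) Hc.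
    by left; exact: rt_refl.
  case=> [x|b'] [y|b''] HP [Hadj [H1 H2]]; rewrite /= in Hadj HP *; try contradiction.
  - case: HP => [Hax|D]; last by left.
    case: (eqVneq b'' b) => [E|ne].
      subst b''; left; exists x; split => //; move=> E; apply: H1; by rewrite E; split.
    by right; split; [exact/eqP|exists x].
  - case: HP => [D|[ne [x [Lx Hax]]]]; first by right.
    left; case: (eqVneq x y) => [<-//|xy].
    eapply rt_trans; [exact Hax|]; apply: rt_step; exists (rcons u b'); split.
      by move=> /rcons_inj [].
    do !split => //; [by rewrite size_rcons su|exact: Lfl Lx|exact/eqP].
move=> [|[]//] [a' [a'a La' Ha']].
apply: (HLA (rcons u b) a a') Ha'.
do !split => //; [by rewrite size_rcons su|exact: Lfl Lab|by move=> E; apply: a'a].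
Qed.

Lemma bridge_S n u : LA (GLL n.+1) -> size u = n -> bridge (adjL u).
Proof.
move=> HLA su [a|b] [a'|b'] //= Lab.
  exact: bridge_case1 HLA su Lab.
move=> Hc; apply: (bridge_case1 HLA su Lab).
apply: crt_sym; first by move=> x y [H1 [H2 H3]]; split; [exact: adj_sym|split => -[??]; auto].
apply: crt_mono Hc => x y [H1 [H2 H3]]; split => //; split => -[??]; auto.
Qed.

Lemma base0 : LA (GLL 0) /\ mg_connected (GLL 0).
Proof.
split.
  move=> l a b [sl [Ll [ab _]]] Hc; apply: ab; apply: crt_nil Hc.
  move=> x y [m [mne [sm _]]]; apply: mne; move/size0nil: sm ->.
  by move/size0nil: sl ->.
move=> a b; case: (eqVneq a b) => [->|ab]; first exact: rt_refl.
apply: rt_step; exists [::]; do !split => //; [exact (@Lfl a [::] (Lletter a))|exact/eqP].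
Qed.

Theorem abstract_main : dendL <-> forall n, label_acyclic (GLL n) /\ mg_connected (GLL n).
Proof.
split.
  move=> D.
  suff H : forall n, LA (GLL n) /\ mg_connected (GLL n).
    move=> n; have [H1 H2] := H n; split => //.
    apply: la_of_LA => //; exact: GLL_cliq.
  elim => [|n [IH1 IH2]]; first exact: base0.
  split.
    apply: LA_step => // u Lu su.
    apply: cycfree_bridge; [exact: adj_sym|exact: adj_irr|exact: (D u Lu).2].
  apply: conn_step => // u Lu su a a' La La'.
  by apply: (D u Lu).1.
move=> H v Lv.
have HLA : forall n, LA (GLL n).
  move=> n; apply: LA_of_la; [exact: GLL_sym|exact: GLL_irr|exact: (H n).1].
split.
  exact: Econn (HLA (size v)) (H (size v).+1).2 Lv (erefl _).
apply: bridge_cycfree; first exact: adj_sym.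
exact: bridge_S (HLA (size v).+1) (erefl _).
Qed.

End Lang.

Lemma crt_map (T U : Type) (R : T -> T -> Prop) (S : U -> U -> Prop) (g : T -> U) a b :
  (forall x y, R x y -> S (g x) (g y)) -> clos_refl_trans T R a b -> clos_refl_trans U S (g a) (g b).
Proof.
move=> H; elim => [x y /H|x|x y z _ IH1 _ IH2]; [exact: rt_step|exact: rt_refl|].
exact: rt_trans IH1 IH2.
Qed.

Lemma tree_iso (T : Type) (V V' : T -> Prop) (adj adj' : T -> T -> Prop) (f : T -> T) :
  (forall x, f (f x) = x) -> (forall x, V' x -> V (f x)) ->
  (forall x y, adj x y -> adj' (f x) (f y)) -> (forall x y, adj' x y -> adj (f x) (f y)) ->
  is_tree V adj -> is_tree V' adj'.
Proof.
move=> ff HV H1 H2 [Hc Hcy]; split.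
  move=> u w /HV Vu /HV Vw; rewrite -(ff u) -(ff w); exact: crt_map H1 (Hc _ _ Vu Vw).
move=> k c k3 ci Hc'; apply: (Hcy k (fun i => f (c i)) k3).
  by move=> i j /(can_inj ff) /ci.
move=> i; exact: H2.
Qed.

Section Rel.
Variable A : finType.
Lemma la_relabel (E E' : seq A -> A -> A -> Prop) f : injective f ->
  (forall l a b, E' l a b -> E (f l) a b) -> label_acyclic E -> label_acyclic E'.
Proof.
move=> fi H Hla k xs ls k2 inj edges dist i j; apply: (fi).
apply: (Hla k xs (fun i => f (ls i))) => //; first by move=> i'; apply: H.
move=> i' j' ne [eq vp]; apply: (dist i' j' ne); split => //; exact: fi.
Qed.

Lemma conn_relabel (E E' : seq A -> A -> A -> Prop) :
  (forall l a b, E l a b -> exists l', E' l' a b) -> mg_connected E -> mg_connected E'.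
Proof.
move=> H Hc a b; apply: crt_mono (Hc a b) => x y [l /H]//.
Qed.
End Rel.

Section Shift.
Variable A : finType.
Variable X : point A -> Prop.

Lemma occursP (w : seq A) x i d : occurs w x i <->
  forall k, k < size w -> x (i + k%:Z)%R = nth d w k.
Proof.
split.
  move=> H k hk; rewrite -H (nth_map 0) ?size_iota // nth_iota //.
move=> H; apply: (@eq_from_nth _ d); first by rewrite size_map size_iota.
move=> k; rewrite size_map size_iota => hk.
by rewrite (nth_map 0) ?size_iota // nth_iota // add0n H.
Qed.

Lemma Lfl_X a w : lang X (a :: w) -> lang X w.
Proof.
move=> [x [Xx [i /(occursP _ _ _ a) H]]]; exists x; split => //; exists (i + 1)%R.
apply/(occursP _ _ _ a) => k hk.
have := H k.+1 hk; rewrite /= => <-; congr x; lia.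
Qed.

Lemma Lfr_X w b : lang X (rcons w b) -> lang X w.
Proof.
move=> [x [Xx [i /(occursP _ _ _ b) H]]]; exists x; split => //; exists i.
apply/(occursP _ _ _ b) => k hk.
rewrite H; last by rewrite size_rcons; lia.
by rewrite nth_rcons hk.
Qed.

Lemma Lel_X w : lang X w -> exists a, lang X (a :: w).
Proof.
move=> [x [Xx [i /(occursP _ _ _ (x i)) H]]]; exists (x (i - 1)%R), x; split => //; exists (i - 1)%R.
apply/(occursP _ _ _ (x i)) => -[|k] hk /=.
  by congr x; lia.
rewrite -H //; congr x; lia.
Qed.

Lemma Ler_X w : lang X w -> exists b, lang X (rcons w b).
Proof.
move=> [x [Xx [i /(occursP _ _ _ (x i)) H]]]; exists (x (i + (size w)%:Z)%R), x; split => //; exists i.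
apply/(occursP _ _ _ (x i)) => k; rewrite size_rcons ltnS leq_eqVlt => /orP [/eqP ->|hk].
  by rewrite nth_rcons ltnn eqxx.
by rewrite nth_rcons hk H.
Qed.

Definition Lrev (w : seq A) := lang X (rev w).

Lemma Lfl_R a w : Lrev (a :: w) -> Lrev w.
Proof. by rewrite /Lrev rev_cons => /Lfr_X. Qed.
Lemma Lfr_R w b : Lrev (rcons w b) -> Lrev w.
Proof. by rewrite /Lrev rev_rcons => /Lfl_X. Qed.
Lemma Lel_R w : Lrev w -> exists a, Lrev (a :: w).
Proof. by rewrite /Lrev => /Ler_X [b H]; exists b; rewrite rev_cons. Qed.
Lemma Ler_R w : Lrev w -> exists b, Lrev (rcons w b).
Proof. by rewrite /Lrev => /Lel_X [b H]; exists b; rewrite rev_rcons. Qed.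

Definition swap (u : A + A) : A + A := match u with inl a => inr a | inr b => inl b end.

Lemma vtx_R v x : vtx Lrev v x <-> vtx (lang X) (rev v) (swap x).
Proof. by case: x => a; rewrite /= /Lrev ?rev_cons ?rev_rcons. Qed.

Lemma adj_R v x y : adjL Lrev v x y <-> adjL (lang X) (rev v) (swap x) (swap y).
Proof.
by case: x => a; case: y => b; rewrite /= /Lrev ?rev_cons ?rev_rcons //= -rcons_cons.
Qed.

Lemma dend_R : dendL (lang X) <-> dendL Lrev.
Proof.
have ss : forall x, swap (swap x) = x by case.
split => D v Lv.
  apply: (tree_iso ss _ _ _ (D _ Lv)).
  - by move=> x /vtx_R.
  - by move=> x y H; apply/adj_R; rewrite !ss.
  - by move=> x y /adj_R.
have Lv' : Lrev (rev v) by rewrite /Lrev revK.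
apply: (tree_iso ss _ _ _ (D _ Lv')).
- by move=> x Vx; apply/vtx_R; rewrite revK ss.
- by move=> x y /adj_R; rewrite revK.
- by move=> x y H; apply/adj_R; rewrite revK !ss.
Qed.

Lemma GR_R n l a b : GR X n l a b <-> GLL Lrev n (rev l) a b.
Proof.
rewrite /GR /GLL /ER /Lrev size_rev revK !rev_cons revK; done.
Qed.

End Shift.

Theorem mainTheorem7 (A : finType) (X : point A -> Prop)
    (HX : shift_space X) (Halph : forall a : A, lang X [:: a]) :
  (dendric X <->
     forall n : nat, label_acyclic (GL X n) /\ mg_connected (GL X n)) /\
  (dendric X <->
     forall n : nat, label_acyclic (GR X n) /\ mg_connected (GR X n)).
Proof.
have M1 := abstract_main (@Lfl_X A X) (@Lfr_X A X) (@Lel_X A X) Halph.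
have HR : forall a : A, Lrev X [:: a] by move=> a; exact: Halph.
have M2 := abstract_main (@Lfl_R A X) (@Lfr_R A X) (@Lel_R A X) HR.
split; first exact: M1.
have D : dendric X <-> dendL (lang X) by [].
rewrite D dend_R M2; split => H n; have [H1 H2] := H n; split.
- apply: (la_relabel (f := @rev A)) H1; [exact: (can_inj (@revK A))|by move=> l a b /GR_R].
- apply: conn_relabel H2 => l a b H'; exists (rev l); apply/GR_R; by rewrite revK.
- apply: (la_relabel (f := @rev A)) H1; [exact: (can_inj (@revK A))|by move=> l a b H'; apply/GR_R; rewrite revK].
- apply: conn_relabel H2 => l a b /GR_R H'; by exists (rev l).
Qed.
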